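(* Let $X$ be an integral regular projective curve of genus $g$ over $\mathbb{F}_q$ and $\mathbf{n}_m=(n_0,\dots,n_m)$ ($m\ge0$) a tuple of positive integers. Then $$\operatorname{Res}_{T_{\mathbf{n}_m}=1}\widehat Z^{(\mathbf{n}_m)}_X(T_{\mathbf{n}_m})=q_{\mathbf{n}_{m-1}}^{\binom{n_m}{2}(g-1)}\sum_{\substack{d_1,\dots,d_k>0\\d_1+\cdots+d_k=n_m}}\frac{\widehat v_{d_1}\cdots\widehat v_{d_k}}{\prod_{j=1}^{k-1}(1-q_{\mathbf{n}_{m-1}}^{d_j+d_{j+1}})}.$$
   Context: Let $\zeta_X(s)=\sum_{D\ge 0}N(D)^{-s}$ be the Artin zeta function of $X$ ($D$ running over effective divisors) and $\widehat\zeta_X(s)=q^{s(g-1)}\zeta_X(s)$ the complete Artin zeta function, a rational function of $q^{-s}$. Derived zeta functions are defined recursively. For the empty tuple $\mathbf{n}_{-1}=()$ put $q_{\mathbf{n}_{-1}}=q$, $T_{\mathbf{n}_{-1}}=q^{-s}$, $\widehat\zeta^{(\mathbf{n}_{-1})}_X=\widehat\zeta_X$. For a tuple $\mathbf{n}_m=(n_0,\dots,n_m)$ of positive integers ($m\ge 0$) put $\mathbf{n}_{m-1}=(n_0,\dots,n_{m-1})$, $q_{\mathbf{n}_m}=q^{n_0n_1\cdots n_m}$, $T_{\mathbf{n}_m}=q^{-n_0n_1\cdots n_m s}$. Writing $\widehat Z^{(\mathbf{n}_{m-1})}_X(T_{\mathbf{n}_{m-1}}):=\widehat\zeta^{(\mathbf{n}_{m-1})}_X(s)$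 (a rational function of $T_{\mathbf{n}_{m-1}}$), set $\widehat\zeta^{(\mathbf{n}_{m-1})}_X(1):=\operatorname{Res}_{T_{\mathbf{n}_{m-1}}=1}\widehat Z^{(\mathbf{n}_{m-1})}_X(T_{\mathbf{n}_{m-1}})$ and for integers $N\ge 1$, $\widehat v_N:=\prod_{k=1}^{N}\widehat\zeta^{(\mathbf{n}_{m-1})}_X(k)$. Then $$\widehat\zeta^{(\mathbf{n}_m)}_X(s)=q_{\mathbf{n}_{m-1}}^{\binom{n_m}{2}(g-1)}\sum_{a=1}^{n_m}\Biggl(\sum_{\substack{k_1,\dots,k_p>0\\k_1+\cdots+k_p=n_m-a}}\frac{\widehat v_{k_1}\cdots\widehat v_{k_p}}{\prod_{j=1}^{p-1}(1-q_{\mathbf{n}_{m-1}}^{k_j+k_{j+1}})}\cdot\frac{1}{1-q_{\mathbf{n}_{m-1}}^{n_ms-n_m+a+k_p}}\Biggr)\widehat\zeta^{(\mathbf{n}_{m-1})}_X(n_ms-n_m+a)\Biggl(\sum_{\substack{l_1,\dots,l_r>0\\l_1+\cdots+l_r=a-1}}\frac{1}{1-q_{\mathbf{n}_{m-1}}^{-n_ms+n_m-a+1+l_1}}\cdot\frac{\widehat v_{l_1}\cdots\widehat v_{l_r}}{\prod_{j=1}^{r-1}(1-q_{\mathbf{n}_{m-1}}^{l_j+l_{j+1}})}\Biggr),$$ where the inner sums run over ordered tuples of positive integers (of any length) with the indicated sum, and an inner sum over tuples summing to $0$ is defined to be $1$. One writes $\widehat Z^{(\mathbf{n}_m)}_X(T_{\mathbf{n}_m}):=\widehat\zeta^{(\mathbf{n}_m)}_X(s)$,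 a rational function of $T_{\mathbf{n}_m}$. (For $m=0$ this is the $\mathrm{SL}_{n_0}$-zeta function of $X$, which coincides with the rank $n_0$ non-abelian zeta function of $X$.) *)

(* Defs.v *)
From HB Require Import structures.
From mathcomp Require Import all_boot all_order all_algebra.
From Stdlib Require Import ClassicalEpsilon.
Set Implicit Arguments. Unset Strict Implicit. Unset Printing Implicit Defensive.
Import Order.TTheory GRing.Theory Num.Theory.
Local Open Scope ring_scope.

(* Ordered tuples of positive integers (compositions) summing to k.
   The fuel argument is >= the number of parts, so compositions k is complete. *)
Fixpoint comps_fuel (fuel k : nat) : seq (seq nat) :=
  if k is 0 then [:: [::]] else
  if fuel is fuel'.+1 then
    flatten [seq [seq d :: c | c <- comps_fuel fuel' (k - d)%N] | d <- iota 1 k]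
  else [::].
Definition compositions (k : nat) : seq (seq nat) := comps_fuel k k.

Section Zeta.
Variable R : realFieldType.

(* r is the coefficient of (T - a)^j in the Laurent expansion at T = a of the
   rational function u/w which agrees with f outside a finite set S.
   Writing Y = T - a, w(Y + a) = Y^n w1(Y) with w1(0) <> 0, u(Y+a)/w1(Y) =
   sum_i c_i Y^i, and the coefficient of Y^j of f is c_(j+n) (0 if j+n < 0);
   c_i is the i-th coefficient of any polynomial c with Y^(i+1) | u(Y+a) - w1 c. *)
Definition is_laurent_coef (f : R -> R) (a : R) (j : int) (r : R) : Prop :=
  exists (u w : {poly R}) (S : seq R),
    w != 0 /\ (forall T, T \notin S -> f T = u.[T] / w.[T]) /\
    exists (n : nat) (w1 : {poly R}),
      w \Po ('X + a%:P) = 'X^n * w1 /\ w1.[0] != 0 /\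
      match (j + n%:Z)%R with
      | Posz i => exists c : {poly R},
          dvdp 'X^(i.+1) ((u \Po ('X + a%:P)) - w1 * c) /\ r = c`_i
      | Negz _ => r = 0
      end.

Definition laurent_coef (f : R -> R) (a : R) (j : int) : R :=
  epsilon (inhabits 0) (is_laurent_coef f a j).

Definition residue1 (f : R -> R) : R := laurent_coef f 1 (-1).

(* q_{n} = q^{n_0 ... n_m}; for the empty tuple this is q *)
Definition qpow (q : nat) (ns : seq nat) : R := ((q ^ (\prod_(i <- ns) i))%N)%:R.

(* complete Artin zeta in T = q^{-s}:  q^{s(g-1)} P(T)/((1-T)(1-qT)) *)
Definition Zhat0 (q g : nat) (P : {poly R}) (T : R) : R :=
  T ^ (1 - g%:Z) * P.[T] / ((1 - T) * (1 - q%:R * T)).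

Definition chain_weight (v : nat -> R) (Q : R) (ks : seq nat) : R :=
  (\prod_(k <- ks) v k) / \prod_(pr <- zip ks (behead ks)) (1 - Q ^+ (pr.1 + pr.2)%N).

Definition zeta_at (f : R -> R) (Q : R) (k : nat) : R :=
  if k == 1%N then residue1 f else f (Q ^- k).

Definition vhat_of (f : R -> R) (Q : R) (N : nat) : R :=
  \prod_(1 <= k < N.+1) zeta_at f Q k.

(* Here T = T_{n_m} = Q^{-n s}, Q = q_{n_{m-1}}, so
   Q^{ns-n+a+k_p} = Q^{a+k_p-n} T^{-1},  Q^{-ns+n-a+1+l_1} = T Q^{n-a+1+l_1},
   and T_{n_{m-1}} at argument ns-n+a equals T Q^{n-a}. *)
Definition left_factor (v : nat -> R) (Q : R) (n a : nat) (T : R) : R :=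
  \sum_(ks <- compositions (n - a)%N)
     chain_weight v Q ks *
     (if ks is [::] then 1
      else (1 - Q ^ ((a + last 0%N ks)%N%:Z - n%:Z) * T^-1)^-1).

Definition right_factor (v : nat -> R) (Q : R) (n a : nat) (T : R) : R :=
  \sum_(ls <- compositions a.-1)
     (if ls is l1 :: _ then (1 - T * Q ^+ (n - a + 1 + l1)%N)^-1 else 1) *
     chain_weight v Q ls.

Definition derive_step (g : nat) (Q : R) (f : R -> R) (n : nat) (T : R) : R :=
  Q ^ ('C(n, 2)%:Z * (g%:Z - 1)) *
  \sum_(1 <= a < n.+1)
     (left_factor (vhat_of f Q) Q n a T * f (T * Q ^+ (n - a)) *
      right_factor (vhat_of f Q) Q n a T).

Fixpoint dzeta_rev (q g : nat) (P : {poly R}) (rns : seq nat) : R -> R :=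
  match rns with
  | [::] => Zhat0 q g P
  | n :: r => derive_step g (qpow q (rev r)) (dzeta_rev q g P r) n
  end.

Definition dzeta (q g : nat) (P : {poly R}) (ns : seq nat) : R -> R :=
  dzeta_rev q g P (rev ns).

Definition vhat (q g : nat) (P : {poly R}) (ns : seq nat) (N : nat) : R :=
  vhat_of (dzeta q g P ns) (qpow q ns) N.

End Zeta.

(* Main.v *)
Require Import Defs.
From HB Require Import structures.
From mathcomp Require Import all_boot all_order all_algebra.
From mathcomp Require Import zify ring lra.
From Stdlib Require Import ClassicalEpsilon.
Import Order.TTheory GRing.Theory Num.Theory.
Local Open Scope ring_scope.

Lemma comps_fuelSS f k : comps_fuel f.+1 k.+1 =
  flatten [seq [seq d :: c | c <- comps_fuel f (k.+1 - d)%N] | d <- iota 1 k.+1].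
Proof. by []. Qed.

Lemma comps_fuelS f k : (k <= f)%N -> comps_fuel f.+1 k = comps_fuel f k.
Proof.
elim: f k => [|f IH] [|k] hk //.
rewrite comps_fuelSS [RHS]comps_fuelSS; congr flatten; apply/eq_in_map => d.
rewrite mem_iota => /andP[d1 d2]; rewrite IH //; lia.
Qed.

Lemma comps_fuel_eq f k : (k <= f)%N -> comps_fuel f k = compositions k.
Proof.
elim: f => [|f IH] hk; first by have -> : k = 0%N by lia.
case: (ltngtP k f.+1) => h; [|lia|by rewrite h].
have hk' : (k <= f)%N by lia.
by rewrite comps_fuelS // IH.
Qed.

Lemma compositions0 : compositions 0 = [:: [::]]. Proof. by []. Qed.

Lemma flatten_allpairs (S T U : Type) (f : S -> T -> U) s (t : S -> seq T) :
  flatten [seq [seq f x y | y <- t x] | x <- s] = [seq f x y | x <- s, y <- t x].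
Proof. by elim: s => //= x s ->. Qed.

Lemma compositionsS k : compositions k.+1 =
  [seq d :: c | d <- iota 1 k.+1, c <- compositions (k.+1 - d)%N].
Proof.
rewrite /compositions comps_fuelSS -flatten_allpairs; congr flatten.
apply/eq_in_map => d; rewrite mem_iota => /andP[d1 d2].
rewrite comps_fuel_eq //; lia.
Qed.

Definition iscomp k (c : seq nat) := all (fun x => (0 < x)%N) c && (sumn c == k).

Lemma mem_comps k c : (c \in compositions k) = iscomp k c.
Proof.
elim/ltn_ind: k c => k IH c.
case: k IH => [|k] IH.
  rewrite compositions0 inE /iscomp; case: c => //= x c.
  apply/esym/negbTE; apply/negP => /andP[/andP[x0 _]]; lia.
rewrite compositionsS; apply/allpairsPdep/idP.
  move=> [d [c' [hd hc ->]]]; move: hd; rewrite mem_iota => /andP[d1 d2].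
  move: hc; rewrite IH; last by lia.
  rewrite /iscomp /= => /andP[-> /eqP ->]; rewrite d1 /=; apply/eqP; lia.
case: c => [|d c]; first by rewrite /iscomp.
rewrite /iscomp /= => /andP[/andP[d0 hc] /eqP hs].
exists d, c; split.
- by rewrite -/(iota 1 k.+1) mem_iota; apply/andP; split; lia.
- rewrite IH; last by lia.
  rewrite /iscomp hc /=; apply/eqP; lia.
- by [].
Qed.

Lemma uniq_comps k : uniq (compositions k).
Proof.
elim/ltn_ind: k => k IH.
case: k IH => [|k] IH //.
rewrite compositionsS; apply: allpairs_uniq_dep.
- exact: iota_uniq.
- move=> d; rewrite mem_iota => /andP[d1 d2]; apply: IH; lia.
- by move=> [x1 y1] [x2 y2] _ _ /= [-> ->].
Qed.

Lemma iscomp_rev k c : iscomp k (rev c) = iscomp k c.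
Proof. by rewrite /iscomp all_rev sumn_rev. Qed.

Lemma big_comps_rev (R : Type) (idx : R) (op : Monoid.com_law idx) k (F : seq nat -> R) :
  \big[op/idx]_(c <- compositions k) F c = \big[op/idx]_(c <- compositions k) F (rev c).
Proof.
rewrite -(big_map rev xpredT).
apply: perm_big; apply: uniq_perm; first exact: uniq_comps.
  rewrite map_inj_uniq ?uniq_comps //; exact: (can_inj revK).
move=> c; rewrite mem_comps; apply/esym.
apply/mapP/idP.
  by move=> [c' hc' ->]; rewrite iscomp_rev -mem_comps.
move=> h; exists (rev c); last by rewrite revK.
by rewrite mem_comps iscomp_rev.
Qed.

Fixpoint psums (s : seq nat) : seq nat :=
  if s is x :: s' then (if s' is y :: _ then (x + y)%N :: psums s' else [::]) else [::].

Lemma zip_psums s : map (fun pr => (pr.1 + pr.2)%N) (zip s (behead s)) = psums s.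
Proof. by elim: s => [|x [|y s] IH] //; move: IH; rewrite /= => ->. Qed.

Lemma psums_rcons s y : psums (rcons s y) = if s is [::] then [::] else rcons (psums s) (last 0%N s + y).
Proof.
elim: s => [|x s IH] //.
case: s IH => [|z s] IH //.
rewrite rcons_cons.
have -> : psums (x :: rcons (z :: s) y) = (x + z)%N :: psums (rcons (z :: s) y) by [].
by rewrite IH.
Qed.

Lemma psums_rev s : psums (rev s) = rev (psums s).
Proof.
elim: s => [|x s IH] //.
rewrite rev_cons psums_rcons IH.
case: s IH => [|y s] IH //=.
case e: (rev (y :: s)) => [|z t]; first by move: (congr1 size e); rewrite size_rev.
rewrite -e rev_cons last_rcons rev_cons addnC //.
Qed.

Lemma iscomp_last k s : iscomp k s -> s != [::] -> (0 < last 0%N s <= k)%N.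
Proof.
case/lastP: s => [|s y] //; rewrite /iscomp all_rcons sumn_rcons last_rcons.
move=> /andP[/andP[y0 _] /eqP <-] _; rewrite y0 /=; lia.
Qed.

Lemma iscomp_head k l s : iscomp k (l :: s) -> (0 < l <= k)%N.
Proof. rewrite /iscomp /= => /andP[/andP[-> _] /eqP <-]; lia. Qed.

Lemma iscomp_last_eq k s : iscomp k s -> s != [::] -> last 0%N s = k -> s = [:: k].
Proof.
case/lastP: s => [|s y] //; rewrite /iscomp all_rcons sumn_rcons last_rcons.
move=> /andP[/andP[y0 hs] /eqP hk] _ hy.
case: s hs hk => [|z s] /=; first by rewrite hy.
move=> /andP[z0 _] hk; lia.
Qed.

Section Poly.
Variable R : realFieldType.
Implicit Types p u w : {poly R}.

Lemma poly_fin_roots p (S : seq R) : (forall T, T \notin S -> p.[T] = 0) -> p = 0.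
Proof.
move=> hp; apply/eqP; apply/negPn/negP => p0.
pose N := (size p + size S)%N.
pose l := [seq (i%:R : R) | i <- iota 0 N].
have ul : uniq l by rewrite map_inj_uniq ?iota_uniq //; exact: (mulrIn (oner_neq0 R)).
pose rs := [seq x <- l | x \notin S].
have : (size rs < size p)%N.
  apply: max_poly_roots => //; last exact: filter_uniq.
  by apply/allP => x; rewrite mem_filter => /andP[hx _]; apply/eqP; apply: hp.
have h1 : (size [seq x <- l | x \in S] <= size S)%N.
  apply: uniq_leq_size; first exact: filter_uniq.
  by move=> x; rewrite mem_filter => /andP[].
have h2 := count_predC (mem S) l.
rewrite !size_filter in h1 *.
have : size l = N by rewrite size_map size_iota.
rewrite /N; move: h1 h2; rewrite /predC /=.
set c1 := count _ l; set c2 := count _ l. lia.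
Qed.

Lemma dvdXn_coef p k i : ('X^k %| p) -> (i < k)%N -> p`_i = 0.
Proof. by case/dvdpP => q ->; rewrite mulrC coefXnM => ->. Qed.
Arguments dvdXn_coef {p k i}.

Lemma dvdXn_cancel k p w1 : w1.[0] != 0 -> ('X^k %| p * w1) = ('X^k %| p).
Proof.
move=> h; rewrite Gauss_dvdpl //; apply: coprimep_expl.
rewrite coprimep_sym; have -> : ('X : {poly R}) = 'X - 0%:P by rewrite polyC0 subr0.
by rewrite coprimep_XsubC /root.
Qed.

Lemma laurent_core (U U' w1 w1' : {poly R}) (n n' : nat) (j : int) (r r' : R) :
  (n <= n')%N -> w1.[0] != 0 -> w1'.[0] != 0 ->
  U * ('X^n' * w1') = U' * ('X^n * w1) ->
  match (j + n%:Z)%R with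
      | Posz i => exists c : {poly R},
          dvdp 'X^(i.+1) (U - w1 * c) /\ r = c`_i
      | Negz _ => r = 0
      end ->
  match (j + n'%:Z)%R with
      | Posz i => exists c : {poly R},
          dvdp 'X^(i.+1) (U' - w1' * c) /\ r' = c`_i
      | Negz _ => r' = 0
      end -> r = r'.
Proof.
move=> hnn w10 w10' E.
set d := (n' - n)%N.
have Xn0 : ('X^n : {poly R}) != 0 by rewrite expf_neq0 // polyX_eq0.
have Eq : U * 'X^d * w1' = U' * w1.
  apply: (mulfI Xn0).
  have hn' : n' = (n + d)%N by rewrite /d; lia.
  move: E; rewrite hn' exprD => E.
  have -> : 'X^n * (U' * w1) = U' * ('X^n * w1) by ring.
  by rewrite -E; ring.
case E1: (j + n%:Z)%R => [i|i]; case E2: (j + n'%:Z)%R => [i'|i'].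
- move=> [c [hc ->]] [c' [hc' ->]].
  have ii : i' = (i + d)%N by rewrite /d; lia.
  have key : (c' - 'X^d * c) * (w1 * w1') =
             w1' * ('X^d * (U - w1 * c)) - w1 * (U' - w1' * c').
    apply/eqP; rewrite -subr_eq0.
    have -> : (c' - 'X^d * c) * (w1 * w1') -
      (w1' * ('X^d * (U - w1 * c)) - w1 * (U' - w1' * c')) =
      U' * w1 - U * 'X^d * w1' by ring.
    by rewrite Eq subrr.
  have hd : 'X^(i'.+1) %| (c' - 'X^d * c) * (w1 * w1').
    rewrite key; apply: dvdp_sub; apply: dvdp_mull; last exact: hc'.
    have -> : i'.+1 = (d + i.+1)%N by lia.
    by rewrite exprD dvdp_mul2l ?expf_neq0 ?polyX_eq0.
  rewrite dvdXn_cancel in hd; last by rewrite hornerM mulf_neq0.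
  have := dvdXn_coef hd (ltnSn i').
  rewrite coefB coefXnM ii ltnNge leq_addl /= addnK => /eqP.
  by rewrite subr_eq0 => /eqP ->.
- lia.
- move=> -> [c' [hc' ->]].
  have hid : (i'.+1 <= d)%N by rewrite /d; lia.
  have h1 : 'X^d %| U'.
    by rewrite -(@dvdXn_cancel d U' w1 w10) -Eq -mulrA; apply: dvdp_mull; apply: dvdp_mulr; exact: dvdpp.
  have h2 : 'X^(i'.+1) %| U' by apply: dvdp_trans h1; rewrite dvdp_exp2l.
  have h3 : 'X^(i'.+1) %| c' * w1'.
    have -> : c' * w1' = U' - (U' - w1' * c') by ring.
    exact: dvdp_sub.
  rewrite dvdXn_cancel // in h3.
  by rewrite (dvdXn_coef h3 (ltnSn i')).
- by move=> -> ->.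
Qed.

Lemma laurent_unique (f : R -> R) a j r1 r2 :
  is_laurent_coef f a j r1 -> is_laurent_coef f a j r2 -> r1 = r2.
Proof.
move=> [u [w [S [w0 [hf [n [w1 [hw [w10 m1]]]]]]]]].
move=> [u' [w' [S' [w0' [hf' [n' [w1' [hw' [w10' m2]]]]]]]]].
have E0 : u * w' = u' * w.
  apply/eqP; rewrite -subr_eq0; apply/eqP.
  have : (u * w' - u' * w) * (w * w') = 0.
    apply: (@poly_fin_roots _ (S ++ S')) => T; rewrite mem_cat negb_or => /andP[h1 h2].
    have := hf T h1; rewrite (hf' T h2) !(hornerM, hornerD, hornerN).
    have [->|wT] := eqVneq w.[T] 0; first by move=> _; rewrite !(mulr0, mul0r).
    have [->|wT'] := eqVneq w'.[T] 0; first by move=> _; rewrite !(mulr0, mul0r).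
    move=> e; have eu : u.[T] = u'.[T] / w'.[T] * w.[T] by rewrite e divfK.
    rewrite eu; field; exact: wT'.
  by move/eqP; rewrite mulf_eq0 mulf_eq0 (negbTE w0) (negbTE w0') !orbF => /eqP.
have E1 : (u \Po ('X + a%:P)) * ('X^n' * w1') = (u' \Po ('X + a%:P)) * ('X^n * w1).
  by rewrite -hw -hw' -!comp_polyM E0.
case: (leqP n n') => hnn.
  exact: (laurent_core _ _ _ _ _ _ _ _ _ hnn w10 w10' E1 m1 m2).
apply/esym; exact: (laurent_core _ _ _ _ _ _ _ _ _ (ltnW hnn) w10' w10 (esym E1) m2 m1).
Qed.

Lemma residue1_eq (f : R -> R) r : is_laurent_coef f 1 (-1) r -> residue1 f = r.
Proof.
move=> h; rewrite /residue1 /laurent_coef.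
apply: (@laurent_unique f 1 (-1) _ r _ h); apply: epsilon_spec; by exists r.
Qed.

Set Implicit Arguments. Unset Strict Implicit.
Definition RatE (f : R -> R) (E : R -> bool) := exists (u w : {poly R}) (S : seq R),
  forall T, (T \notin S) || ~~ E T -> w.[T] != 0 /\ f T = u.[T] / w.[T].

Definition Reg1 f := exists E, RatE f E /\ ~~ E 1.

Definition SP f r := exists g h (S : seq R), Reg1 g /\ Reg1 h /\
  (forall T, T \notin S -> f T = g T / (T - 1) + h T) /\ r = g 1.

Lemma RatE_sub f (E E' : R -> bool) : (forall T, E T -> E' T) -> RatE f E -> RatE f E'.
Proof.
move=> hE [u [w [S H]]]; exists u, w, S => T hT; apply: H.
case/orP: hT => [->//|h]; apply/orP; right; apply/negP => /hE; exact/negP.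
Qed.

Lemma RatE_ext f f' E : (forall T, f T = f' T) -> RatE f E -> RatE f' E.
Proof.
move=> e [u [w [S H]]]; exists u, w, S => T hT; rewrite -e; exact: H.
Qed.


Lemma RatE_const c E : RatE (fun _ => c) E.
Proof. exists c%:P, 1, [::] => T _; rewrite !hornerE divr1; split => //; exact: oner_neq0. Qed.

Lemma good_cat (S1 S2 : seq R) (E : R -> bool) T :
  (T \notin S1 ++ S2) || ~~ E T -> ((T \notin S1) || ~~ E T) /\ ((T \notin S2) || ~~ E T).
Proof. by rewrite mem_cat negb_or; case/orP => [/andP[-> ->]|->] //; rewrite !orbT. Qed.

Lemma RatE_add f g E : RatE f E -> RatE g E -> RatE (fun T => f T + g T) E.
Proof.
move=> [u1 [w1 [S1 H1]]] [u2 [w2 [S2 H2]]].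
exists (u1 * w2 + u2 * w1), (w1 * w2), (S1 ++ S2) => T /good_cat [/H1 [n1 e1] /H2 [n2 e2]].
rewrite hornerD !hornerM e1 e2; split; first by rewrite mulf_neq0.
by field; apply/andP.
Qed.

Lemma RatE_mul f g E : RatE f E -> RatE g E -> RatE (fun T => f T * g T) E.
Proof.
move=> [u1 [w1 [S1 H1]]] [u2 [w2 [S2 H2]]].
exists (u1 * u2), (w1 * w2), (S1 ++ S2) => T /good_cat [/H1 [n1 e1] /H2 [n2 e2]].
rewrite !hornerM e1 e2; split; first by rewrite mulf_neq0.
by field; apply/andP.
Qed.

Lemma RatE_sum (I : eqType) (s : seq I) (F : I -> R -> R) E :
  (forall i, i \in s -> RatE (F i) E) -> RatE (fun T => \sum_(i <- s) F i T) E.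
Proof.
elim: s => [|i s IH] H.
  by eapply RatE_ext; [|exact: (RatE_const 0 E)] => T /=; rewrite big_nil.
have h1 := H i (mem_head _ _).
have h2 : RatE (fun T => \sum_(j <- s) F j T) E.
  by apply: IH => j hj; apply: H; rewrite inE hj orbT.
eapply RatE_ext; last exact: (RatE_add h1 h2).
by move=> T /=; rewrite big_cons.
Qed.

Lemma RatE_scale f E c : c != 0 -> RatE f E -> RatE (fun T => f (T * c)) (fun T => E (T * c)).
Proof.
move=> c0 [u [w [S H]]].
exists (u \Po (c%:P * 'X)), (w \Po (c%:P * 'X)), [seq x / c | x <- S] => T hT.
rewrite !horner_comp !hornerE (mulrC c); apply: H.
case/orP: hT => [hT|->]; last by rewrite orbT.
apply/orP; left; apply: contra hT => hT.
by apply/mapP; exists (T * c) => //; rewrite mulfK.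
Qed.

Lemma RatE_invL c : c != 0 ->
  RatE (fun T => (1 - c * T^-1)^-1) (fun T => (T == 0) || (T == c)).
Proof.
move=> c0; exists 'X, ('X - c%:P), [:: 0; c] => T.
rewrite !inE negb_or orbb => /andP[T0 Tc].
rewrite !hornerE subr_eq0; split => //.
by field; rewrite subr_eq0 Tc T0.
Qed.

Lemma RatE_invR d : RatE (fun T => (1 - T * d)^-1) (fun T => T * d == 1).
Proof.
exists 1, (1 - d%:P * 'X), [:: d^-1] => T hT.
have hd : T * d != 1.
  case/orP: hT => [|//]; apply: contra; move=> /eqP e.
  have d0 : d != 0 by apply/eqP => d0; move: e; rewrite d0 mulr0 => /eqP; rewrite eq_sym oner_eq0.
  by rewrite inE -[T](mulfK d0) e div1r.
by rewrite !hornerE (mulrC d) subr_eq0 eq_sym hd.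
Qed.

Lemma Reg1_RatE f E : RatE f E -> ~~ E 1 -> Reg1 f.
Proof. by move=> h1 h2; exists E. Qed.

Lemma Reg1_val f : Reg1 f -> exists u w, w.[1] != 0 /\ f 1 = u.[1] / w.[1].
Proof.
move=> [E [[u [w [S H]]] h]]; exists u, w; apply: H; by rewrite h orbT.
Qed.

Lemma Reg1_const c : Reg1 (fun _ => c).
Proof. exists (fun _ => false); split => //; exact: RatE_const. Qed.

Lemma Reg1_mul f g : Reg1 f -> Reg1 g -> Reg1 (fun T => f T * g T).
Proof.
move=> [E1 [h1 n1]] [E2 [h2 n2]]; exists (fun T => E1 T || E2 T); split.
  by apply: RatE_mul; [apply: (RatE_sub _ h1)|apply: (RatE_sub _ h2)] => T ->; rewrite ?orbT.
by rewrite negb_or n1 n2.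
Qed.

Lemma Reg1_add f g : Reg1 f -> Reg1 g -> Reg1 (fun T => f T + g T).
Proof.
move=> [E1 [h1 n1]] [E2 [h2 n2]]; exists (fun T => E1 T || E2 T); split.
  by apply: RatE_add; [apply: (RatE_sub _ h1)|apply: (RatE_sub _ h2)] => T ->; rewrite ?orbT.
by rewrite negb_or n1 n2.
Qed.

Lemma dvdX_root (p : {poly R}) : ('X %| p) = (p.[0] == 0).
Proof. by have := dvdp_XsubCl p 0; rewrite polyC0 subr0. Qed.

Lemma SP_laurent f r : SP f r -> is_laurent_coef f 1 (-1) r.
Proof.
move=> [g [h [S [[Eg [[ug [wg [Sg Hg]]] ng]] [[Eh [[uh [wh [Sh Hh]]] nh]] [hf ->]]]]]].
have [wg1 eg1] : wg.[1] != 0 /\ g 1 = ug.[1] / wg.[1] by apply: Hg; rewrite ng orbT.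
have [wh1 eh1] : wh.[1] != 0 /\ h 1 = uh.[1] / wh.[1] by apply: Hh; rewrite nh orbT.
exists (ug * wh + uh * wg * ('X - 1)), (wg * wh * ('X - 1)), (1 :: S ++ Sg ++ Sh).
split.
  rewrite !mulf_neq0 //; first by apply: contraNneq wg1 => ->; rewrite horner0.
    by apply: contraNneq wh1 => ->; rewrite horner0.
  by rewrite subr_eq0; apply/negP => /eqP/(congr1 (size : {poly R} -> nat)); rewrite size_polyX size_polyC oner_neq0.
split.
  move=> T; rewrite inE !mem_cat !negb_or => /and4P[T1 TS TSg TSh].
  have [wgT egT] : wg.[T] != 0 /\ g T = ug.[T] / wg.[T] by apply: Hg; rewrite TSg.
  have [whT ehT] : wh.[T] != 0 /\ h T = uh.[T] / wh.[T] by apply: Hh; rewrite TSh.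
  rewrite hf // egT ehT !(hornerE, hornerM, hornerD).
  by field; rewrite wgT whT subr_eq0 T1.
exists 1%N, ((wg * wh) \Po ('X + 1%:P)); split.
  rewrite comp_polyM comp_polyB comp_polyX comp_polyC addrK expr1 mulrC //.
split; first by rewrite horner_comp !hornerE mulf_neq0.
rewrite (_ : (-1 + 1%:Z)%R = Posz 0) //.
exists (g 1)%:P; split; last by rewrite coefC.
rewrite expr1 dvdX_root !(horner_comp, hornerE, hornerM, hornerD) eg1; apply/eqP.
by field.
Qed.

Lemma SP_residue f r : SP f r -> residue1 f = r.
Proof. by move=> /SP_laurent/residue1_eq. Qed.


Lemma SP_ext f f' r : (forall T, f T = f' T) -> SP f r -> SP f' r.
Proof.
move=> e [g [h [S [hg [hh [hf hr]]]]]]; exists g, h, S; do 2!split => //.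
by split => // T hT; rewrite -e hf.
Qed.

Lemma SP_add f f' r r' : SP f r -> SP f' r' -> SP (fun T => f T + f' T) (r + r').
Proof.
move=> [g [h [S [hg [hh [hf ->]]]]]] [g' [h' [S' [hg' [hh' [hf' ->]]]]]].
exists (fun T => g T + g' T), (fun T => h T + h' T), (S ++ S').
split; first exact: Reg1_add. split; first exact: Reg1_add.
split => // T; rewrite mem_cat negb_or => /andP[h1 h2].
by rewrite hf // hf' // mulrDl; ring.
Qed.

Lemma SP_mulr f k r : SP f r -> Reg1 k -> SP (fun T => f T * k T) (r * k 1).
Proof.
move=> [g [h [S [hg [hh [hf ->]]]]]] hk.
exists (fun T => g T * k T), (fun T => h T * k T), S.
split; first exact: Reg1_mul. split; first exact: Reg1_mul.
by split => // T hT; rewrite hf //; ring.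
Qed.

Lemma SP_mull f k r : Reg1 k -> SP f r -> SP (fun T => k T * f T) (k 1 * r).
Proof.
move=> hk hf; apply: (SP_ext (f := fun T => f T * k T)); first by move=> T; rewrite mulrC.
by rewrite mulrC; apply: SP_mulr.
Qed.

Lemma SP_reg f : Reg1 f -> SP f 0.
Proof.
move=> hf; exists (fun _ => 0), f, [::]; split; first exact: Reg1_const.
by split => //; split => // T _; rewrite mul0r add0r.
Qed.

Lemma SP_sum (I : eqType) (s : seq I) (F : I -> R -> R) (r : I -> R) :
  (forall i, i \in s -> SP (F i) (r i)) ->
  SP (fun T => \sum_(i <- s) F i T) (\sum_(i <- s) r i).
Proof.
elim: s => [|i s IH] H.
  rewrite big_nil; apply: (SP_ext (f := fun _ => 0)); first by move=> T; rewrite big_nil.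
  exact/SP_reg/Reg1_const.
have h1 := H i (mem_head _ _).
have h2 : SP (fun T => \sum_(j <- s) F j T) (\sum_(j <- s) r j).
  by apply: IH => j hj; apply: H; rewrite inE hj orbT.
rewrite big_cons; apply: (SP_ext _ (SP_add h1 h2)) => T /=.
by rewrite big_cons.
Qed.

Lemma SP_invL1 : SP (fun T => (1 - T^-1)^-1) 1.
Proof.
exists (fun _ => 1), (fun _ => 1), [:: 0; 1].
split; first exact: Reg1_const. split; first exact: Reg1_const.
split => // T; rewrite !inE negb_or => /andP[T0 T1].
by field; rewrite T0 subr_eq0 T1.
Qed.


Definition Ebad (Q : R) (T : R) := (T == 0) || ((Q^-1 <= T) && (T <= 1)).
Definition FE (f : R -> R) (Q : R) := forall T, f ((Q * T)^-1) = f T.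

Lemma expz1g (T : R) (g : nat) : T != 0 -> T ^ (1 - g%:Z) = T * (T ^+ g)^-1.
Proof. by move=> T0; rewrite expfzDr // exprnN expr1z. Qed.

Lemma sub1_mul_neq0 (c T : R) : c != 0 -> T != c^-1 -> 1 - c * T != 0.
Proof.
move=> c0; rewrite subr_eq0; apply: contra => /eqP e; apply/eqP.
by apply: (mulfI c0); rewrite mulfV.
Qed.

Lemma inv_le1 (Q : R) : 1 < Q -> Q^-1 <= 1.
Proof. by move=> h; rewrite invf_le1 ?ltW // (lt_trans ltr01). Qed.

Lemma inv_neq1 (Q : R) : 1 < Q -> Q^-1 != 1.
Proof. by move=> h; rewrite lt_eqF // invf_lt1 // (lt_trans ltr01). Qed.

Lemma cw_cons (v : nat -> R) (Q : R) d c : chain_weight v Q (d :: c) =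
  v d * ((if c is l :: _ then (1 - Q ^+ (d + l)%N)^-1 else 1) * chain_weight v Q c).
Proof.
rewrite /chain_weight; case: c => [|l c] /=.
  by rewrite !big_cons !big_nil !(mulr1, mul1r, invr1).
rewrite !big_cons invfM; ring.
Qed.

Lemma cw_rev (v : nat -> R) (Q : R) ks : chain_weight v Q (rev ks) = chain_weight v Q ks.
Proof.
have E s' : \prod_(pr <- zip s' (behead s')) (1 - Q ^+ (pr.1 + pr.2)%N) =
    \prod_(k <- psums s') (1 - Q ^+ k) by rewrite -zip_psums big_map.
by rewrite /chain_weight big_rev !E psums_rev big_rev.
Qed.

Section Base.
Variables (q g : nat) (P : {poly R}).
Hypothesis q1 : (1 < q)%N.
Hypothesis hP : forall T : R, T != 0 ->
     P.[T] = (q%:R) ^+ g * T ^+ (2 * g) * P.[(q%:R * T)^-1].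

Local Notation q' := (q%:R : R).
Lemma q'gt1 : 1 < q'. Proof. by rewrite ltr1n. Qed.
Lemma q'0 : q' != 0. Proof. by apply: lt0r_neq0; apply: lt_trans q'gt1. Qed.

Lemma Zhat0_FE : FE (Zhat0 q g P) q'.
Proof.
move=> T; rewrite /Zhat0.
have [->|T0] := eqVneq T 0; first by rewrite !mulr0 invr0 !mulr0.
have q0 := q'0.
have hPT := hP T0.
have T'0 : (q' * T)^-1 != 0 by rewrite invr_eq0 mulf_neq0.
rewrite !expz1g //.
have [->|T1] := eqVneq T 1.
  by rewrite mulr1 mulfV // !(subrr, mulr0, mul0r, invr0).
have [e|qT1] := eqVneq (q' * T) 1.
  by rewrite e invr1 !(subrr, mulr0, mul0r, invr0).
have -> : P.[(q' * T)^-1] = P.[T] / (q' ^+ g * T ^+ (2 * g)).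
  by rewrite hPT; field; rewrite expf_neq0 // expf_neq0.
rewrite exprVn exprMn mulnC exprM.
set A := T ^+ g; set B := q' ^+ g.
have A0 : A != 0 by rewrite expf_neq0.
have B0 : B != 0 by rewrite expf_neq0.
field.
rewrite A0 B0 q0 T0 /=.
by rewrite !subr_eq0 !(eq_sym 1) T1 qT1.
Qed.


Lemma Zhat0_RatE : RatE (Zhat0 q g P) (Ebad q').
Proof.
apply: (RatE_sub (E := fun T => [|| T == 0, T == 1 | T == q'^-1])).
  move=> T /or3P [] /eqP -> ; rewrite /Ebad ?eqxx //.
  - by rewrite lexx inv_le1 ?orbT // q'gt1.
  - by rewrite lexx inv_le1 ?orbT // q'gt1.
exists ('X * P), ('X^g * ((1 - 'X) * (1 - q'%:P * 'X))), [:: 0; 1; q'^-1] => T.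
rewrite !inE orbb !negb_or => /and3P[T0 T1 Tq].
have hq : 1 - q' * T != 0 by apply: sub1_mul_neq0 => //; exact: q'0.
rewrite /Zhat0 !(hornerCM, hornerM, hornerD, hornerN, hornerXn, hornerX, hornerC) expz1g //.
split; first by rewrite !mulf_neq0 ?expf_neq0 // subr_eq0 eq_sym.
by field; rewrite hq subr_eq0 eq_sym T1 expf_neq0.
Qed.

Lemma Zhat0_SP : exists r, SP (Zhat0 q g P) r.
Proof.
pose g0 := fun T : R => - (T ^ (1 - g%:Z) * P.[T] / (1 - q' * T)).
exists (g0 1), g0, (fun _ => 0), [:: 1; q'^-1].
split.
  exists (fun T => (T == 0) || (T == q'^-1)); split.
    exists (- ('X * P)), ('X^g * (1 - q'%:P * 'X)), [:: 0; q'^-1] => T.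
    rewrite !inE orbb !negb_or => /andP[T0 Tq].
    have hq : 1 - q' * T != 0 by apply: sub1_mul_neq0 => //; exact: q'0.
    rewrite /g0 !(hornerCM, hornerM, hornerD, hornerN, hornerXn, hornerX, hornerC) expz1g //.
    split; first by rewrite !mulf_neq0 ?expf_neq0.
    by field; rewrite hq expf_neq0.
  by rewrite negb_or oner_neq0 eq_sym inv_neq1 // q'gt1.
split; first exact: Reg1_const.
split => // T; rewrite !inE negb_or => /andP[T1 Tq].
have hq : 1 - q' * T != 0 by apply: sub1_mul_neq0 => //; exact: q'0.
rewrite /Zhat0 /g0 addr0; field.
by rewrite hq !subr_eq0 T1 eq_sym T1.
Qed.

End Base.


Section Step.
Variables (g : nat) (Q : R) (f : R -> R) (n : nat) (r0 : R).
Hypotheses (Q1 : 1 < Q) (n0 : (0 < n)%N) (fFE : FE f Q) (fRat : RatE f (Ebad Q))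
  (fSP : SP f r0).
Local Notation v := (vhat_of f Q).

Lemma Qpos : 0 < Q. Proof. exact: lt_trans ltr01 Q1. Qed.
Lemma Q0 : Q != 0. Proof. exact: lt0r_neq0 Qpos. Qed.
Lemma Qn0 k : Q ^+ k != 0. Proof. exact: expf_neq0 Q0. Qed.
Lemma Qk_pos k : 0 < Q ^+ k. Proof. exact: exprn_gt0 Qpos. Qed.

Lemma invQ_le m k : (m <= k)%N -> (Q ^+ k)^-1 <= (Q ^+ m)^-1.
Proof. by move=> h; rewrite lef_pV2 ?posrE ?Qk_pos // ler_eXn2l. Qed.
Lemma invQ_le1 m : (Q ^+ m)^-1 <= 1.
Proof. by have := invQ_le (leq0n m); rewrite expr0 invr1. Qed.
Lemma invQ_leQ m : (0 < m)%N -> (Q ^+ m)^-1 <= Q^-1.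
Proof. by move=> h; have := invQ_le h; rewrite expr1. Qed.
Lemma invQ_lt1 : Q^-1 < 1. Proof. by rewrite invf_lt1 ?Qpos. Qed.

Definition E1 T := (T == 0) || (((Q ^+ n)^-1 <= T) && (T <= Q^-1)).
Lemma E1_sub T : E1 T -> Ebad (Q ^+ n) T.
Proof.
rewrite /E1 /Ebad => /orP [->//|/andP[h1 h2]].
by rewrite h1 (le_trans h2) ?orbT // ltW // invQ_lt1.
Qed.
Lemma E1_1 : ~~ E1 1.
Proof. by rewrite /E1 negb_or oner_neq0 /= negb_and; apply/orP; right; rewrite -ltNge invQ_lt1. Qed.

Lemma RatE_E1 h : RatE h E1 -> RatE h (Ebad (Q ^+ n)) /\ Reg1 h.
Proof. move=> H; split; [exact: RatE_sub E1_sub H | exists E1; split => //; exact: E1_1]. Qed.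

Lemma left_right a T : (1 <= a <= n)%N ->
  left_factor v Q n a ((Q ^+ n * T)^-1) = right_factor v Q n (n.+1 - a) T.
Proof.
move=> ha; rewrite /left_factor /right_factor.
have -> : (n.+1 - a).-1 = (n - a)%N by lia.
rewrite [RHS]big_comps_rev; apply: eq_big_seq => ks hks.
rewrite cw_rev mulrC; congr (_ * _).
case/lastP: ks hks => [|s y] hks //.
rewrite last_rcons rev_rcons invrK.
have -> : (n - (n.+1 - a) + 1 + y)%N = (a + y)%N by lia.
case: s {hks} => [|z s] /=; congr (_^-1); congr (1 - _);
  by rewrite mulrA exprnP -expfzDr ?Q0 // subrK -exprnP mulrC.
Qed.

Lemma inv_invQ k T : (Q ^+ k * (Q ^+ k * T)^-1)^-1 = T.
Proof. by rewrite invfM invrK mulKf ?Qn0. Qed.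

Lemma F_FE : FE (derive_step g Q f n) (Q ^+ n).
Proof.
move=> T; rewrite /derive_step; congr (_ * _).
rewrite [RHS]big_nat_rev; apply: eq_big_nat => a /andP[a1 a2].
have -> : (1 + n.+1 - a.+1)%N = (n.+1 - a)%N by lia.
set b := (n.+1 - a)%N.
have hb : (1 <= b <= n)%N by rewrite /b; lia.
have ha : (1 <= a <= n)%N by lia.
rewrite (left_right _ ha).
have -> : right_factor v Q n a ((Q ^+ n * T)^-1) = left_factor v Q n b T.
  have := left_right ((Q ^+ n * T)^-1) hb.
  by rewrite inv_invQ (_ : (n.+1 - b)%N = a) //; rewrite /b; lia.
have -> : (Q ^+ n * T)^-1 * Q ^+ (n - a) = (Q * (T * Q ^+ (n - b)))^-1.
  have hn : Q ^+ n = Q ^+ (n - a) * (Q * Q ^+ (n - b)).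
    by rewrite -exprS -exprD; congr (Q ^+ _); rewrite /b; lia.
  have [->|T0] := eqVneq T 0; first by rewrite !(mulr0, mul0r, invr0).
  rewrite hn; field; rewrite T0 Q0 !Qn0 //.
rewrite fFE; ring.
Qed.

Definition Lterm a ks T := chain_weight v Q ks *
  (if ks is [::] then 1 else (1 - Q ^ ((a + last 0%N ks)%N%:Z - n%:Z) * T^-1)^-1).

Lemma invL_E1 c : c != 0 -> (Q ^+ n)^-1 <= c -> c <= Q^-1 ->
  RatE (fun T => (1 - c * T^-1)^-1) E1.
Proof.
move=> c0 h1 h2; apply: RatE_sub (RatE_invL c0) => T /orP [/eqP ->|/eqP ->]; first by rewrite /E1 eqxx.
by rewrite /E1 h1 h2 orbT.
Qed.

Lemma Lterm_facts a ks : (1 <= a <= n)%N -> ks \in compositions (n - a) ->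
  RatE (Lterm a ks) (Ebad (Q ^+ n)) /\
  SP (Lterm a ks) (chain_weight v Q ks * (ks == [:: (n - a)%N])%:R).
Proof.
move=> ha; rewrite mem_comps => hks.
case: ks hks => [|x s] hks.
  rewrite /Lterm /= mulr0; split; first exact: RatE_const.
  exact/SP_reg/Reg1_const.
have hne : x :: s != [::] by [].
have hl := iscomp_last _ _ hks hne.
set y := last 0%N (x :: s) in hl.
case: (posnP (n - a - y)%N) => hm.
  have ey : y = (n - a)%N by lia.
  have eks : x :: s = [:: (n - a)%N] by apply: iscomp_last_eq.
  rewrite eks eqxx mulr1.
  have e : forall T, chain_weight v Q [:: (n - a)%N] * (1 - T^-1)^-1 =
       Lterm a [:: (n - a)%N] T.
    move=> T; rewrite /Lterm /=.
    by rewrite (_ : ((a + (n - a))%N%:Z - n%:Z)%R = 0) ?expr0z ?mul1r //; lia.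
  split.
    apply: RatE_ext e _; apply: RatE_mul; first exact: RatE_const.
    apply: (RatE_ext (f := fun T => (1 - 1 * T^-1)^-1)); first by move=> T; rewrite mul1r.
    apply: RatE_sub (RatE_invL (oner_neq0 R)) => T /orP[/eqP->|/eqP->]; rewrite /Ebad ?eqxx //.
    by rewrite lexx invQ_le1 orbT.
  have := SP_mull (Reg1_const (chain_weight v Q [:: (n - a)%N])) SP_invL1.
  by rewrite mulr1; apply: SP_ext.
have neq : (x :: s == [:: (n - a)%N]) = false.
  apply/negbTE; apply/eqP => e; move: hm; rewrite /y e /=; lia.
rewrite neq mulr0.
set m := (n - a - y)%N in hm.
have hz : ((a + y)%N%:Z - n%:Z)%R = - (m%:Z) by rewrite /m; lia.
set c := (Q ^+ m)^-1.
have c0 : c != 0 by rewrite invr_eq0 Qn0.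
have hr : RatE (fun T => (1 - c * T^-1)^-1) E1.
  apply: invL_E1 => //; [apply: invQ_le; rewrite /m; lia | exact: invQ_leQ].
have e : forall T, chain_weight v Q (x :: s) * (1 - c * T^-1)^-1 = Lterm a (x :: s) T.
  by move=> T; rewrite /Lterm -/y hz -exprnN.
have [h1 h2] := RatE_E1 (RatE_mul (RatE_const (chain_weight v Q (x :: s)) E1) hr).
split; first exact: RatE_ext e h1.
exact: SP_ext e (SP_reg h2).
Qed.


Lemma L_RatE a : (1 <= a <= n)%N -> RatE (left_factor v Q n a) (Ebad (Q ^+ n)).
Proof.
move=> ha; apply: (RatE_ext (f := fun T => \sum_(ks <- compositions (n - a)) Lterm a ks T)) => //.
by apply: RatE_sum => ks hks; exact: (Lterm_facts ha hks).1.
Qed.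

Lemma L_SP a : (1 <= a < n)%N -> SP (left_factor v Q n a) (v (n - a)).
Proof.
move=> ha; have ha' : (1 <= a <= n)%N by lia.
apply: (SP_ext (f := fun T => \sum_(ks <- compositions (n - a)) Lterm a ks T)) => //.
have := SP_sum (fun ks hks => (Lterm_facts ha' hks).2).
rewrite (bigD1_seq [:: (n - a)%N]) ?uniq_comps //=; last first.
  by rewrite mem_comps /iscomp /= addn0 eqxx andbT; lia.
rewrite eqxx mulr1 big1 ?addr0; last by move=> ks /negbTE ->; rewrite mulr0.
by rewrite /chain_weight big_cons big_nil /= (big_nil (R:=R)) invr1 !mulr1.
Qed.

Lemma L_n T : left_factor v Q n n T = 1.
Proof.
rewrite /left_factor subnn compositions0 big_cons big_nil /chain_weight !big_nil /=.
by rewrite invr1 !mulr1 addr0.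
Qed.

Lemma R_RatE a : (1 <= a <= n)%N -> RatE (right_factor v Q n a) E1.
Proof.
move=> ha.
apply: (RatE_ext (f := fun T => \sum_(ls <- compositions a.-1)
  ((if ls is l1 :: _ then (1 - T * Q ^+ (n - a + 1 + l1)%N)^-1 else 1) *
     chain_weight v Q ls))) => //.
apply: RatE_sum => ls; rewrite mem_comps.
case: ls => [|l s] hls; first exact: RatE_const.
have hl := iscomp_head _ _ _ hls.
set m := (n - a + 1 + l)%N.
apply: RatE_mul; last exact: RatE_const.
apply: RatE_sub (RatE_invR (Q ^+ m)) => T /eqP e.
have eT : T = (Q ^+ m)^-1 by rewrite -[T](mulfK (Qn0 m)) e div1r.
rewrite /E1 eT invQ_le ?invQ_leQ ?orbT //; rewrite /m; lia.
Qed.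

Lemma Ebad_shift k T : Ebad Q (T * Q ^+ k) ->
  (T == 0) || (((Q ^+ k.+1)^-1 <= T) && (T <= (Q ^+ k)^-1)).
Proof.
rewrite /Ebad mulf_eq0 (negbTE (Qn0 k)) orbF => /orP[->//|/andP[h1 h2]].
apply/orP; right; apply/andP; split.
  by rewrite -(ler_pM2r (Qk_pos k)) exprS invfM mulfVK ?Qn0.
by rewrite -(ler_pM2r (Qk_pos k)) mulVf ?Qn0.
Qed.

Lemma fshift_RatE a : (1 <= a <= n)%N ->
  RatE (fun T => f (T * Q ^+ (n - a))) (Ebad (Q ^+ n)).
Proof.
move=> ha; apply: RatE_sub (RatE_scale (Qn0 _) fRat) => T /Ebad_shift /orP[/eqP ->|/andP[h1 h2]]; first by rewrite /Ebad ?/E1 eqxx.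
rewrite /Ebad (le_trans _ h1) ?(le_trans h2) ?invQ_le1 ?orbT //.
apply: invQ_le; lia.
Qed.

Lemma fshift_E1 a : (1 <= a < n)%N ->
  RatE (fun T => f (T * Q ^+ (n - a))) E1.
Proof.
move=> ha; apply: RatE_sub (RatE_scale (Qn0 _) fRat) => T /Ebad_shift /orP[/eqP ->|/andP[h1 h2]]; first by rewrite /Ebad ?/E1 eqxx.
rewrite /E1 (le_trans _ h1) ?(le_trans h2) ?orbT //.
  apply: invQ_leQ; lia.
apply: invQ_le; lia.
Qed.

Definition term a T :=
  left_factor v Q n a T * f (T * Q ^+ (n - a)) * right_factor v Q n a T.

Lemma term_RatE a : (1 <= a <= n)%N -> RatE (term a) (Ebad (Q ^+ n)).
Proof.
move=> ha; apply: RatE_mul; first apply: RatE_mul.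
- exact: L_RatE.
- exact: fshift_RatE.
- exact: (RatE_E1 (R_RatE ha)).1.
Qed.

Lemma r0v : r0 = v 1.
Proof. by rewrite /vhat_of big_nat1 /zeta_at eqxx (SP_residue fSP). Qed.

Lemma vS k : (0 < k)%N -> v k * f (1 * Q ^+ k) = v k.+1.
Proof.
move=> k0; rewrite /vhat_of [in RHS]big_nat_recr //= /zeta_at.
rewrite (_ : (k.+1 == 1%N) = false); last by apply/negbTE; lia.
by rewrite mul1r -fFE -exprS exprnN.
Qed.

Lemma term_SP a : (1 <= a <= n)%N ->
  SP (term a) (v (n - a).+1 * right_factor v Q n a 1).
Proof.
move=> ha; have hR := (RatE_E1 (R_RatE ha)).2.
case: (ltngtP a n) => han; [|lia|].
- have h := SP_mulr (SP_mulr (L_SP (a := a) _) (RatE_E1 (fshift_E1 (a := a) _)).2) hR.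
  rewrite -vS; last by lia.
  by apply: h; lia.
- subst a; rewrite subnn.
  have h := SP_mulr (SP_mull (Reg1_const 1) fSP) hR.
  rewrite -r0v -[r0]mul1r.
  apply: (SP_ext _ h) => T.
  by rewrite /term L_n subnn expr0 mulr1.
Qed.


Lemma F_RatE : RatE (derive_step g Q f n) (Ebad (Q ^+ n)).
Proof.
apply: (RatE_ext (f := fun T => Q ^ ('C(n, 2)%:Z * (g%:Z - 1)) *
   \sum_(a <- index_iota 1 n.+1) term a T)) => //.
apply: RatE_mul; first exact: RatE_const.
apply: RatE_sum => a; rewrite mem_index_iota => ha; apply: term_RatE; lia.
Qed.

Lemma res_sum : \sum_(1 <= a < n.+1) v (n - a).+1 * right_factor v Q n a 1 =
  \sum_(ds <- compositions n) chain_weight v Q ds.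
Proof.
case: n n0 => [//|n'] _.
rewrite compositionsS big_allpairs_dep.
have -> : iota 1 n'.+1 = index_iota 1 n'.+2 by rewrite /index_iota subn1.
rewrite [LHS]big_nat_rev; apply: eq_big_nat => d hd.
have -> : (1 + n'.+2 - d.+1)%N = (n'.+2 - d)%N by lia.
have -> : (n'.+1 - (n'.+2 - d)).+1 = d by lia.
rewrite /right_factor.
have -> : (n'.+2 - d).-1 = (n'.+1 - d)%N by lia.
rewrite big_distrr; apply: eq_bigr => c _.
rewrite cw_cons; case: c => [|l c] //=.
by rewrite mul1r (_ : (n'.+1 - (n'.+2 - d) + 1 + l)%N = (d + l)%N) //; lia.
Qed.

Lemma F_SP : SP (derive_step g Q f n)
  (Q ^ ('C(n, 2)%:Z * (g%:Z - 1)) * \sum_(ds <- compositions n) chain_weight v Q ds).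
Proof.
rewrite -res_sum.
apply: (SP_ext (f := fun T => Q ^ ('C(n, 2)%:Z * (g%:Z - 1)) *
   \sum_(a <- index_iota 1 n.+1) term a T)) => //.
apply: (SP_mull (Reg1_const _)).
apply: SP_sum => a; rewrite mem_index_iota => ha; apply: term_SP; lia.
Qed.

End Step.


Lemma qpow_nil (q : nat) : qpow R q [::] = q%:R.
Proof. by rewrite /qpow big_nil expn1. Qed.

Lemma qpow_rcons (q : nat) ns n : qpow R q (rcons ns n) = qpow R q ns ^+ n.
Proof. by rewrite /qpow big_rcons /= expnM natrX. Qed.

Lemma qpow_gt1 (q : nat) ns : (1 < q)%N -> all (fun x => 0 < x)%N ns -> 1 < qpow R q ns.
Proof.
move=> q1 hall; rewrite /qpow ltr1n.
have : (0 < \prod_(i <- ns) i)%N.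
  elim: ns hall => [|x s IH] /=; first by rewrite big_nil.
  by move=> /andP[x0 hs]; rewrite big_cons muln_gt0 x0 IH.
move=> h; rewrite -{1}(expn0 q) ltn_exp2l //.
Qed.

Lemma dzeta_rcons (q g : nat) P ns n :
  dzeta q g P (rcons ns n) = derive_step g (qpow R q ns) (dzeta q g P ns) n.
Proof. by rewrite /dzeta rev_rcons /= revK. Qed.

Lemma level_inv (q g : nat) (P : {poly R}) ns : (1 < q)%N ->
  (forall T : R, T != 0 ->
     P.[T] = (q%:R) ^+ g * T ^+ (2 * g) * P.[(q%:R * T)^-1]) ->
  all (fun x => 0 < x)%N ns ->
  [/\ FE (dzeta q g P ns) (qpow R q ns), RatE (dzeta q g P ns) (Ebad (qpow R q ns))
    & exists r, SP (dzeta q g P ns) r].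
Proof.
move=> q1 hP; elim/last_ind: ns => [|ns n IH] hall.
  rewrite qpow_nil; split.
  - exact: Zhat0_FE.
  - exact: Zhat0_RatE.
  - exact: Zhat0_SP.
move: hall; rewrite all_rcons => /andP[n0 hall].
have [h1 h2 [r0 h3]] := IH hall.
have Q1 := qpow_gt1 q1 hall.
rewrite dzeta_rcons qpow_rcons; split.
- exact: F_FE.
- exact: F_RatE.
- eexists; exact: (F_SP g Q1 n0 h1 h2 h3).
Qed.

End Poly.

Unset Implicit Arguments. Set Strict Implicit.

Theorem theorem2p6 (R : realFieldType) (p k q g : nat) (P : {poly R})
    (ns : seq nat) (n : nat) :
  prime p -> (0 < k)%N -> q = (p ^ k)%N ->
  size P = (2 * g).+1 -> P.[0] = 1 ->
  (forall T : R, T != 0 ->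
     P.[T] = (q%:R) ^+ g * T ^+ (2 * g) * P.[(q%:R * T)^-1]) ->
  all (fun x => (0 < x)%N) (rcons ns n) ->
  residue1 (dzeta q g P (rcons ns n)) =
  qpow R q ns ^ ('C(n, 2)%:Z * (g%:Z - 1)) *
  \sum_(ds <- compositions n) chain_weight (vhat q g P ns) (qpow R q ns) ds.
Proof.
move=> pp k0 eq _ _ hP; rewrite all_rcons => /andP[n0 hall].
have q1 : (1 < q)%N by rewrite eq -{1}(expn0 p) ltn_exp2l // prime_gt1.
have [h1 h2 [r0 h3]] := level_inv q1 hP hall.
have Q1 := qpow_gt1 R q1 hall.
rewrite dzeta_rcons; apply: SP_residue.
exact: (F_SP g Q1 n0 h1 h2 h3).
Qed.
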